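(* In the model of the context (with $\mathbf R_b=\mathbf I_M$, $M\ge2$, $\rho\in[0,1)$ fixed), suppose that $\Pr(Y>0)=1$ and $\Pr(\|\hat{\mathbf h}_b\|^2>0)=1$. Then there exists $\alpha_0\in(0,1)$ such that $\bar R_s^\infty(\alpha_0)>0$.
   Context: Let $M\ge 2$ be an integer; fix $\sigma^2>0$, $\tau_p>0$, $\rho_p>0$, $T_c>\tau_p$, $\eta=1-\tau_p/T_c$. Let $\mathbf R_e\in\mathbb C^{M\times M}$ be Hermitian positive definite, $\mathbf C\in\mathbb C^{M\times M}$ with spectral norm $\|\mathbf C\|\le1$, $\rho\in[0,1)$, and $\beta_b,\beta_e>0$. Let $\mathbf g_b,\mathbf u\sim\mathcal{CN}(\mathbf 0,\mathbf I_M)$ and $\mathbf n_p\sim\mathcal{CN}(\mathbf 0,\sigma^2\mathbf I_M)$ be mutually independent. Define $\mathbf h_b=\sqrt{\beta_b}\,\mathbf g_b$, $\mathbf g_e=\rho\mathbf C\mathbf g_b+\sqrt{1-\rho^2}\,\mathbf u$, $\mathbf h_e=\sqrt{\beta_e}\,\mathbf R_e^{1/2}\mathbf g_e$, $\mathbf y_p=\sqrt{\tau_p\rho_p}\,\mathbf h_b+\mathbf n_p$, the MMSE estimate $\hat{\mathbf h}_b=\sqrt{\tau_p\rho_p}\,\beta_b(\tau_p\rho_p\beta_b+\sigma^2)^{-1}\mathbf y_p$, and $\Omega_{\tilde h}=\dfrac{\beta_b\sigma^2}{\tau_p\rho_p\beta_b+\sigma^2}$ (the per-entry variance of the estimation error).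 Let $\mathbf w=\hat{\mathbf h}_b/\|\hat{\mathbf h}_b\|$ and let $\mathbf V\in\mathbb C^{M\times(M-1)}$ have orthonormal columns spanning the orthogonal complement of $\hat{\mathbf h}_b$. Set $X=\mathbf h_e^H\mathbf w$, $Y=\|\mathbf V^H\mathbf h_e\|^2$. For $\alpha\in(0,1)$ (fraction of power given to data) define $\gamma_b^\infty(\alpha)=\dfrac{\alpha\|\hat{\mathbf h}_b\|^2}{\Omega_{\tilde h}(\alpha+(1-\alpha)(M-1))}$, $\gamma_e^\infty(\alpha)=\dfrac{\alpha|X|^2}{(1-\alpha)Y}$, and the high-SNR ergodic secrecy rate $\bar R_s^\infty(\alpha)=\eta\,\mathbb E\big[(\log_2(1+\gamma_b^\infty(\alpha))-\log_2(1+\gamma_e^\infty(\alpha)))^+\big]$, with $(x)^+=\max\{0,x\}$. *)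

(* Defs.v *)
From HB Require Import structures.
From mathcomp Require Import all_boot all_order all_algebra.
From mathcomp Require Import all_classical all_reals all_analysis.
From mathcomp Require Import complex.
Set Implicit Arguments. Unset Strict Implicit. Unset Printing Implicit Defensive.
Import Order.TTheory GRing.Theory Num.Theory.
Local Open Scope ring_scope.
Local Open Scope classical_set_scope.

Section Model.
Variable R : realType.
Local Notation C := (R[i]).

Definition cabs2 (z : C) : R := complex.Re z ^+ 2 + complex.Im z ^+ 2.

Definition cnorm2 n (v : 'cV[C]_n) : R := \sum_(i < n) cabs2 (v i 0).

Definition rC (x : R) : C := complex.Complex x 0.

Definition adj m n (A : 'M[C]_(m, n)) : 'M[C]_(n, m) := (map_mx (@conjc R) A)^T.

Definition hermitian n (A : 'M[C]_n) : Prop := adj A = A.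

Definition hpd n (A : 'M[C]_n) : Prop :=
  hermitian A /\
  forall x : 'cV[C]_n, x != 0 -> 0 < complex.Re ((adj x *m A *m x) 0 0)
                       /\ complex.Im ((adj x *m A *m x) 0 0) = 0.

Definition spec_norm_le1 m n (A : 'M[C]_(m, n)) : Prop :=
  forall x : 'cV[C]_n, cnorm2 (A *m x) <= cnorm2 x.

Definition log2 (x : R) : R := ln x / ln 2.

(* Index of the 6M real coordinates: which vector (0 = g_b, 1 = u, 2 = n_p),
   which entry, and real (true) / imaginary (false) part. *)
Definition coord M {T : Type} (gb u np : T -> 'cV[C]_M)
  (k : 'I_3 * 'I_M * bool) (w : T) : R :=
  let v := if k.1.1 == 0 :> nat then gb w
           else if k.1.1 == 1 :> nat then u w else np w in
  if k.2 then complex.Re (v k.1.2 0) else complex.Im (v k.1.2 0).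

Definition mutually_independent d (T : measurableType d) (P : probability T R)
  (I : finType) (X : I -> T -> R) : Prop :=
  forall B : I -> set R, (forall i, measurable (B i)) ->
    P (\bigcap_(i in [set: I]) (X i @^-1` B i)) =
    \big[*%E/1%E]_(i : I) P (X i @^-1` B i).

(* g_b, u ~ CN(0, I_M), n_p ~ CN(0, sigma2 I_M), mutually independent:
   i.e. all 6M real coordinates are mutually independent real Gaussians,
   centred, with variance 1/2 (for g_b, u) and sigma2/2 (for n_p).
   normal_prob m s has mean m and standard deviation s. *)
Definition gaussian_model d (T : measurableType d) (P : probability T R) M
  (sigma2 : R) (gb u np : T -> 'cV[C]_M) : Prop :=
  (forall k, measurable_fun [set: T] (coord gb u np k)) /\
  mutually_independent P (coord gb u np) /\
  (forall k (B : set R), measurable B ->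
     P (coord gb u np k @^-1` B) =
     normal_prob 0 (Num.sqrt ((if k.1.1 == 2 :> nat then sigma2 else 1) / 2)) B).

Definition h_b M (betab : R) (gb : 'cV[C]_M) : 'cV[C]_M := rC (Num.sqrt betab) *: gb.

Definition g_e M (rho : R) (Cm : 'M[C]_M) (gb u : 'cV[C]_M) : 'cV[C]_M :=
  rC rho *: (Cm *m gb) + rC (Num.sqrt (1 - rho ^+ 2)) *: u.

Definition h_e M (betae : R) (Reh : 'M[C]_M) (ge : 'cV[C]_M) : 'cV[C]_M :=
  rC (Num.sqrt betae) *: (Reh *m ge).

Definition y_p M (taup rhop : R) (hb np : 'cV[C]_M) : 'cV[C]_M :=
  rC (Num.sqrt (taup * rhop)) *: hb + np.

Definition hhat_b M (taup rhop betab sigma2 : R) (yp : 'cV[C]_M) : 'cV[C]_M :=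
  rC (Num.sqrt (taup * rhop) * betab / (taup * rhop * betab + sigma2)) *: yp.

Definition Omega_ht (taup rhop betab sigma2 : R) : R :=
  betab * sigma2 / (taup * rhop * betab + sigma2).

Definition wvec M (hh : 'cV[C]_M) : 'cV[C]_M := rC (Num.sqrt (cnorm2 hh))^-1 *: hh.

Definition gamma_b_inf M (Om alpha : R) (hh : 'cV[C]_M) : R :=
  alpha * cnorm2 hh / (Om * (alpha + (1 - alpha) * (M%:R - 1))).

Definition gamma_e_inf (alpha X Y : R) : R :=
  alpha * X / ((1 - alpha) * Y).

End Model.

(* Main.v *)
Require Import Defs.
From HB Require Import structures.
From mathcomp Require Import all_boot all_order all_algebra.
From mathcomp Require Import all_classical all_reals all_analysis.
From mathcomp Require Import complex.
From mathcomp Require Import lra ring.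
Import Order.TTheory GRing.Theory Num.Theory.
Local Open Scope ring_scope.
Local Open Scope classical_set_scope.
Lemma int_lb (R : realType) d (T : measurableType d) (mu : {measure set T -> \bar R})
  (D B : set T) (mD : measurable D) (mB : measurable B) (f : T -> \bar R) (c : R) :
  0 <= c -> B `<=` D -> (forall x, D x -> (0 <= f x)%E) ->
  (forall x, B x -> (c%:E <= f x)%E) ->
  (c%:E * mu B <= \int[mu]_(x in D) f x)%E.
Proof.
move=> c0 BD f0 fB.
rewrite integral_mkcond ge0_integralTE; last first.
  by move=> x; rewrite /patch; case: ifP => // /[!inE] /f0.
apply: ereal_sup_ubound => /=.
exists (scale_nnsfun (indic_nnsfun R mB) c0).
  move=> x /=; rewrite /patch /= /measurable_realfun.mindic indicE; case: (boolP (x \in B)) => xB.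
    have xD : D x by apply: BD; exact: set_mem.
    by rewrite mulr1 ifT ?inE //; exact: fB (set_mem xB).
  rewrite mulr0; case: ifP => // /[!inE] /f0 //.
have := sintegralrM mu c (indic_nnsfun R mB).
rewrite [sintegral _ (HBNNSimple.NonNegSimpleFun.sort (indic_nnsfun R mB))]sintegral_indic//.
Qed.

Lemma normal_itv_gt0 (R : realType) (s a b : R) : 0 < s -> a < b ->
  (0 < normal_prob 0 s `]a, b[%classic)%E.
Proof.
move=> s0 ab.
set c := normal_peak s * expR (- (a ^+ 2 + b ^+ 2) / (s ^+ 2 *+ 2)).
have c0 : 0 < c by rewrite mulr_gt0 ?expR_gt0 ?normal_peak_gt0 ?gt_eqF.
apply: (@lt_le_trans _ _ (c%:E * lebesgue_measure `]a, b[%classic)%E).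
  rewrite lebesgue_measure_itv /= lte_fin ab -EFinM lte_fin mulr_gt0 // subr_gt0 //.
apply: int_lb => //; first exact: ltW.
  by move=> x _; rewrite lee_fin normal_pdf_ge0.
move=> x /=; rewrite in_itv /= => /andP [ax xb].
rewrite lee_fin normal_pdfE ?gt_eqF //= /normal_fun.
apply: ler_wpM2l; first exact: normal_peak_ge0.
rewrite ler_expR subr0 !mulNr lerN2 ler_wpM2r //.
  by rewrite invr_ge0 mulrn_wge0 // exprn_ge0 // ltW.
move: ax xb; move: (x : R) => y ay yb; have [y0|y0] := leP 0 y; nra.
Qed.
Section CX.
Variable R : realType.
Lemma ReD (a b : R[i]) : complex.Re (a + b) = complex.Re a + complex.Re b.
Proof. by case: a => ??; case: b. Qed.
Lemma ImD (a b : R[i]) : complex.Im (a + b) = complex.Im a + complex.Im b.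
Proof. by case: a => ??; case: b. Qed.
Lemma ReM (a b : R[i]) : complex.Re (a * b) = complex.Re a * complex.Re b - complex.Im a * complex.Im b.
Proof. by case: a => ??; case: b. Qed.
Lemma ImM (a b : R[i]) : complex.Im (a * b) = complex.Re a * complex.Im b + complex.Im a * complex.Re b.
Proof. by case: a => ??; case: b. Qed.
Lemma ReJ (a : R[i]) : complex.Re (a^*)%C = complex.Re a.
Proof. by case: a. Qed.
Lemma ImJ (a : R[i]) : complex.Im (a^*)%C = - complex.Im a.
Proof. by case: a. Qed.
Lemma Re0 : complex.Re (0 : R[i]) = 0. Proof. by []. Qed.
Lemma Im0 : complex.Im (0 : R[i]) = 0. Proof. by []. Qed.
Lemma Re1 : complex.Re (1 : R[i]) = 1. Proof. by []. Qed.
Lemma Im1 : complex.Im (1 : R[i]) = 0. Proof. by []. Qed.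
Lemma ReN (a : R[i]) : complex.Re (- a) = - complex.Re a. Proof. by case: a. Qed.
Lemma ImN (a : R[i]) : complex.Im (- a) = - complex.Im a. Proof. by case: a. Qed.
Lemma rCM (a b : R) : rC a * rC b = rC (a * b).
Proof. rewrite /rC; apply/eqP; rewrite eq_complex /=. apply/andP; split; apply/eqP; ring. Qed.
Lemma ReSum (J : Type) (s : seq J) (F : J -> R[i]) :
  complex.Re (\sum_(j <- s) F j) = \sum_(j <- s) complex.Re (F j).
Proof. elim: s => [|j s IH]; rewrite ?big_nil ?big_cons ?ReD ?IH //. Qed.
Lemma ImSum (J : Type) (s : seq J) (F : J -> R[i]) :
  complex.Im (\sum_(j <- s) F j) = \sum_(j <- s) complex.Im (F j).
Proof. elim: s => [|j s IH]; rewrite ?big_nil ?big_cons ?ImD ?IH //. Qed.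

Lemma adjM m n p (A : 'M[R[i]]_(m, n)) (B : 'M[R[i]]_(n, p)) :
  adj (A *m B) = adj B *m adj A.
Proof. by rewrite /adj map_mxM trmx_mul. Qed.
Lemma adjK m n (A : 'M[R[i]]_(m, n)) : adj (adj A) = A.
Proof. by apply/matrixP => i j; rewrite /adj !mxE conjcK. Qed.
Lemma adjZ m n c (A : 'M[R[i]]_(m, n)) : adj (c *: A) = c^*%C *: adj A.
Proof. by apply/matrixP => i j; rewrite /adj !mxE rmorphM. Qed.
Lemma adjD m n (A B : 'M[R[i]]_(m, n)) : adj (A + B) = adj A + adj B.
Proof. by apply/matrixP => i j; rewrite /adj !mxE rmorphD. Qed.
Lemma adjB m n (A B : 'M[R[i]]_(m, n)) : adj (A - B) = adj A - adj B.
Proof. by apply/matrixP => i j; rewrite /adj !mxE rmorphB. Qed.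

Lemma cabs2E (z : R[i]) : cabs2 z = complex.Re (z^*%C * z).
Proof. case: z => a b; rewrite /cabs2 /=; ring. Qed.
Lemma ImJM (z : R[i]) : complex.Im (z^*%C * z) = 0.
Proof. case: z => a b /=; ring. Qed.

Lemma cnorm2E n (v : 'cV[R[i]]_n) : cnorm2 v = complex.Re ((adj v *m v) 0 0).
Proof.
rewrite /cnorm2 mxE ReSum; apply: eq_bigr => i _.
by rewrite /adj !mxE cabs2E.
Qed.
Lemma cnorm2_Im n (v : 'cV[R[i]]_n) : complex.Im ((adj v *m v) 0 0) = 0.
Proof.
rewrite mxE ImSum big1 // => i _; by rewrite /adj !mxE ImJM.
Qed.
Lemma cnorm2_ge0 n (v : 'cV[R[i]]_n) : 0 <= cnorm2 v.
Proof.
by rewrite /cnorm2 sumr_ge0 // => i _; rewrite /cabs2 addr_ge0 // sqr_ge0.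
Qed.
Lemma cnorm2_adj n (v : 'cV[R[i]]_n) : adj v *m v = (rC (cnorm2 v))%:M.
Proof.
apply/matrixP => i j; rewrite !ord1 [in RHS]mxE eqxx mulr1n cnorm2E /rC.
by apply/eqP; rewrite eq_complex /= cnorm2_Im !eqxx.
Qed.

Lemma cabs2_rCM (c : R) (z : R[i]) : cabs2 (rC c * z) = c ^+ 2 * cabs2 z.
Proof. case: z => a b; rewrite /cabs2 /rC /=; ring. Qed.

Lemma conj_rC (c : R) : (rC c)^*%C = rC c.
Proof. by rewrite /rC /= oppr0. Qed.

Lemma wvec_sq n (h : 'cV[R[i]]_n) : 0 < cnorm2 h ->
  (Num.sqrt (cnorm2 h))^-1 ^+ 2 = (cnorm2 h)^-1.
Proof. by move=> h0; rewrite exprVn sqr_sqrtr // ltW. Qed.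

Lemma X_eq n (h e : 'cV[R[i]]_n) : 0 < cnorm2 h ->
  cabs2 ((adj e *m wvec h) 0 0) = cabs2 ((adj e *m h) 0 0) / cnorm2 h.
Proof.
move=> h0; rewrite /wvec -scalemxAr mxE cabs2_rCM wvec_sq //.
by rewrite mulrC.
Qed.

Lemma mx11M (A B : 'M[R[i]]_1) : (A *m B) 0 0 = A 0 0 * B 0 0.
Proof. by rewrite mxE big_ord1. Qed.

Lemma proj_identity k (V : 'M[R[i]]_(k.+1, k)) (h e : 'cV[R[i]]_(k.+1)) :
  0 < cnorm2 h -> adj V *m V = 1%:M -> adj V *m h = 0 ->
  cnorm2 (adj V *m e) = cnorm2 e - cabs2 ((adj e *m wvec h) 0 0).
Proof.
move=> h0 VV Vh.
set c := (Num.sqrt (cnorm2 h))^-1.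
set w := wvec h.
have ww : adj w *m w = 1%:M.
  rewrite /w /wvec adjZ conj_rC -scalemxAl -scalemxAr scalerA rCM cnorm2_adj.
  rewrite -mul_scalar_mx -scalar_mxM rCM.
  rewrite (_ : c * c * cnorm2 h = 1) //.
  by rewrite -expr2 wvec_sq // mulVf // gt_eqF.
have Vw : adj V *m w = 0 by rewrite /w /wvec -scalemxAr Vh scaler0.
have wV : adj w *m V = 0 by rewrite -[V]adjK -adjM Vw; apply/matrixP => i j; rewrite /adj !mxE conjc0.
pose U : 'M[R[i]]_(k.+1) := row_mx w V.
have UU : adj U *m U = 1%:M.
  rewrite /U /adj (map_row_mx conjc w V) (tr_row_mx (w ^ conjc)%sesqui).
  rewrite -!/(adj _) (mul_col_row (adj w) (adj V) w V) ww wV Vw VV.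
  exact: (esym (scalar_mx_block 1 k 1)).
have := mulmx1C UU.
rewrite /U /adj (map_row_mx conjc w V) (tr_row_mx (w ^ conjc)%sesqui) -!/(adj _).
rewrite (mul_row_col w V (adj w) (adj V)) => UU'.
have VVa : V *m adj V = 1%:M - w *m adj w by rewrite -UU' addrC addKr.
rewrite !cnorm2E adjM adjK mulmxA -(mulmxA (adj e)) VVa.
have sub00 : forall (A B : 'M[R[i]]_1), (A - B) 0 0 = A 0 0 - B 0 0.
  by move=> A B; rewrite !mxE.
rewrite mulmxBr mulmx1 mulmxBl sub00.
rewrite ReD ReN; congr (_ - _).
rewrite (mulmxA (adj e) w (adj w)) -(mulmxA (adj e *m w) (adj w) e) mx11M cabs2E mulrC.
by rewrite -[adj w *m e]adjK adjM adjK /adj !mxE.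
Qed.
End CX.
Section Cont.
Variables (R : realType) (T I : Type) (xw : I -> T -> R) (x0 : I -> R).

Definition cont (Q : T -> R) (q : R) := forall e, 0 < e ->
  exists2 dl, 0 < dl & forall w, (forall k, `|xw k w - x0 k| < dl) -> `|Q w - q| < e.

Lemma cont_cst c : cont (fun _ => c) c.
Proof. by move=> e e0; exists 1 => // w _; rewrite subrr normr0. Qed.

Lemma cont_coord k : cont (xw k) (x0 k).
Proof. by move=> e e0; exists e. Qed.

Lemma cont_add Q1 q1 Q2 q2 : cont Q1 q1 -> cont Q2 q2 ->
  cont (fun w => Q1 w + Q2 w) (q1 + q2).
Proof.
move=> c1 c2 e e0.
have e20 : 0 < e / 2 by rewrite divr_gt0.
have [d1 d10 h1] := c1 _ e20; have [d2 d20 h2] := c2 _ e20.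
exists (Num.min d1 d2); first by rewrite lt_min d10 d20.
move=> w hw.
have /h1 H1 : forall k, `|xw k w - x0 k| < d1.
  by move=> k; have := hw k; rewrite lt_min => /andP[].
have /h2 H2 : forall k, `|xw k w - x0 k| < d2.
  by move=> k; have := hw k; rewrite lt_min => /andP[].
rewrite (_ : _ - _ = (Q1 w - q1) + (Q2 w - q2)); last by ring.
apply: (le_lt_trans (ler_normD _ _)).
lra.
Qed.

Lemma cont_mul Q1 q1 Q2 q2 : cont Q1 q1 -> cont Q2 q2 ->
  cont (fun w => Q1 w * Q2 w) (q1 * q2).
Proof.
move=> c1 c2 e e0.
have n1 : 0 < `|q1| + 1 by rewrite ltr_wpDl.
have n2 : 0 < `|q2| + 1 by rewrite ltr_wpDl.
set e1 := e / (2 * (`|q2| + 1)).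
set e2' := e / (2 * (`|q1| + 1)).
set e2 := Num.min 1 e2'.
have e10 : 0 < e1 by rewrite divr_gt0 // mulr_gt0.
have e2'0 : 0 < e2' by rewrite divr_gt0 // mulr_gt0.
have e20 : 0 < e2 by rewrite lt_min ltr01.
have E1 : e1 * (`|q2| + 1) = e / 2 by rewrite /e1; field; rewrite gt_eqF.
have E2 : e2' * (`|q1| + 1) = e / 2 by rewrite /e2'; field; rewrite gt_eqF.
have [d1 d10 h1] := c1 _ e10; have [d2 d20 h2] := c2 _ e20.
exists (Num.min d1 d2); first by rewrite lt_min d10 d20.
move=> w hw.
have /h1 H1 : forall k, `|xw k w - x0 k| < d1.
  by move=> k; have := hw k; rewrite lt_min => /andP[].
have /h2 H2 : forall k, `|xw k w - x0 k| < d2.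
  by move=> k; have := hw k; rewrite lt_min => /andP[].
rewrite (_ : _ - _ = (Q1 w - q1) * Q2 w + q1 * (Q2 w - q2)); last by ring.
apply: (le_lt_trans (ler_normD _ _)); rewrite !normrM.
have H2a : `|Q2 w - q2| < 1 by apply: (lt_le_trans H2); rewrite ge_min lexx.
have H2b : `|Q2 w - q2| < e2' by apply: (lt_le_trans H2); rewrite ge_min lexx orbT.
have hQ2 : `|Q2 w| <= `|q2| + 1.
  have : `|Q2 w| <= `|q2| + `|Q2 w - q2|.
    by rewrite -[X in `|X|](subrK q2) addrC ler_normD.
  move=> h; apply: (le_trans h); rewrite lerD2l; exact: ltW.
have t1 : `|Q1 w - q1| * `|Q2 w| < e / 2.
  rewrite -E1; apply: (le_lt_trans (y := `|Q1 w - q1| * (`|q2| + 1))).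
    by apply: ler_wpM2l.
  by rewrite ltr_pM2r.
have t2 : `|q1| * `|Q2 w - q2| <= e / 2.
  rewrite -E2 mulrC; apply: ler_pM; rewrite ?normr_ge0 ?ltW //.
  by rewrite ltrDl.
lra.
Qed.

Lemma cont_opp Q q : cont Q q -> cont (fun w => - Q w) (- q).
Proof.
move=> c e e0; have [dl dl0 h] := c e e0; exists dl => // w /h.
by rewrite -opprD normrN.
Qed.

Lemma cont_sum (J : Type) (s : seq J) (Q : J -> T -> R) (q : J -> R) :
  (forall j, cont (Q j) (q j)) ->
  cont (fun w => \sum_(j <- s) Q j w) (\sum_(j <- s) q j).
Proof.
move=> hc; elim: s => [|j s IH].
  rewrite big_nil; under eq_fun do rewrite big_nil; exact: cont_cst.
rewrite big_cons; under eq_fun do rewrite big_cons.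
exact: cont_add.
Qed.


Definition ccont (Z : T -> R[i]) (z : R[i]) :=
  cont (fun w => complex.Re (Z w)) (complex.Re z) /\
  cont (fun w => complex.Im (Z w)) (complex.Im z).

Lemma ccont_cst c : ccont (fun _ => c) c.
Proof. split; exact: cont_cst. Qed.

Lemma ccont_add Z1 z1 Z2 z2 : ccont Z1 z1 -> ccont Z2 z2 ->
  ccont (fun w => Z1 w + Z2 w) (z1 + z2).
Proof.
move=> [a1 b1] [a2 b2]; split.
  rewrite ReD; under eq_fun do rewrite ReD; exact: cont_add.
rewrite ImD; under eq_fun do rewrite ImD; exact: cont_add.
Qed.

Lemma ccont_mul Z1 z1 Z2 z2 : ccont Z1 z1 -> ccont Z2 z2 ->
  ccont (fun w => Z1 w * Z2 w) (z1 * z2).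
Proof.
move=> [a1 b1] [a2 b2]; split.
  rewrite ReM; under eq_fun do rewrite ReM.
  by apply: cont_add; [|apply: cont_opp]; apply: cont_mul.
rewrite ImM; under eq_fun do rewrite ImM.
by apply: cont_add; apply: cont_mul.
Qed.

Lemma ccont_conj Z z : ccont Z z -> ccont (fun w => (Z w)^*%C) z^*%C.
Proof.
move=> [a b]; split.
  by rewrite ReJ; under eq_fun do rewrite ReJ.
rewrite ImJ; under eq_fun do rewrite ImJ; exact: cont_opp.
Qed.

Lemma ccont_sum (J : Type) (s : seq J) (Q : J -> T -> R[i]) (q : J -> R[i]) :
  (forall j, ccont (Q j) (q j)) ->
  ccont (fun w => \sum_(j <- s) Q j w) (\sum_(j <- s) q j).
Proof.
move=> hc; elim: s => [|j s IH].
  rewrite big_nil; under eq_fun do rewrite big_nil; exact: ccont_cst.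
rewrite big_cons; under eq_fun do rewrite big_cons.
exact: ccont_add.
Qed.

Definition mcont m n (A : T -> 'M[R[i]]_(m, n)) (A0 : 'M[R[i]]_(m, n)) :=
  forall i j, ccont (fun w => A w i j) (A0 i j).
Arguments mcont {m n}.

Lemma mcont_cst m n (A : 'M[R[i]]_(m, n)) : mcont (fun _ => A) A.
Proof. move=> i j; exact: ccont_cst. Qed.

Lemma mcont_add m n (A B : T -> 'M[R[i]]_(m, n)) A0 B0 :
  mcont A A0 -> mcont B B0 -> mcont (fun w => A w + B w) (A0 + B0).
Proof.
move=> hA hB i j; rewrite [(A0 + B0) i j]mxE; under eq_fun do rewrite mxE.
exact: ccont_add.
Qed.

Lemma mcont_scale m n (c : R[i]) (A : T -> 'M[R[i]]_(m, n)) A0 :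
  mcont A A0 -> mcont (fun w => c *: A w) (c *: A0).
Proof.
move=> hA i j; rewrite [(c *: A0) i j]mxE; under eq_fun do rewrite mxE.
apply: ccont_mul => //; exact: ccont_cst.
Qed.

Lemma mcont_mul m n p (A : T -> 'M[R[i]]_(m, n)) (B : T -> 'M[R[i]]_(n, p)) A0 B0 :
  mcont A A0 -> mcont B B0 -> mcont (fun w => A w *m B w) (A0 *m B0).
Proof.
move=> hA hB i j; rewrite [(A0 *m B0) i j]mxE; under eq_fun do rewrite mxE.
apply: ccont_sum => k; exact: ccont_mul.
Qed.

Lemma mcont_adj m n (A : T -> 'M[R[i]]_(m, n)) A0 :
  mcont A A0 -> mcont (fun w => adj (A w)) (adj A0).
Proof.
move=> hA i j; rewrite /adj [X in ccont _ X]mxE [X in ccont _ X]mxE; under eq_fun do rewrite !mxE.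
exact: ccont_conj.
Qed.

Lemma cont_cabs2 Z z : ccont Z z -> cont (fun w => cabs2 (Z w)) (cabs2 z).
Proof.
move=> [a b]; rewrite /cabs2; apply: cont_add; rewrite expr2;
  under eq_fun do rewrite expr2; exact: cont_mul.
Qed.

Lemma cont_cnorm2 m (A : T -> 'cV[R[i]]_m) A0 : mcont A A0 ->
  cont (fun w => cnorm2 (A w)) (cnorm2 A0).
Proof.
move=> hA; rewrite /cnorm2; apply: cont_sum => i; exact: cont_cabs2.
Qed.

End Cont.
Arguments cont {R T I} xw x0 Q q.
Arguments ccont {R T I} xw x0 Z z.
Arguments mcont {R T I} xw x0 {m n} A A0.
Section Pt.
Variable R : realType.

Lemma rC1 : rC 1 = 1 :> R[i]. Proof. by []. Qed.

Lemma cabs2_gt0 (z : R[i]) : z != 0 -> 0 < cabs2 z.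
Proof.
case: z => a b nz; rewrite /cabs2 /= lt_def addr_ge0 ?sqr_ge0 // andbT.
rewrite paddr_eq0 ?sqr_ge0 // !sqrf_eq0.
by apply: contra nz => /andP[/eqP-> /eqP->].
Qed.

Lemma cnorm2_entry n (v : 'cV[R[i]]_n) i : cabs2 (v i 0) <= cnorm2 v.
Proof.
rewrite /cnorm2 (bigD1 i) //= lerDl sumr_ge0 // => j _.
by rewrite /cabs2 addr_ge0 // sqr_ge0.
Qed.

Lemma adj_delta n (i : 'I_n) : adj (delta_mx i 0 : 'cV[R[i]]_n) = delta_mx 0 i.
Proof.
apply/matrixP => a b; rewrite /adj !mxE conjc_nat.
by rewrite !ord1 andbC.
Qed.

Lemma nz_entry m n (A : 'M[R[i]]_(m, n)) : A != 0 -> exists i j, A i j != 0.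
Proof.
move=> nz; case/boolP: [exists i, exists j, A i j != 0].
  by case/existsP => i /existsP [j h]; exists i, j.
move/existsPn => H; case/negP: nz; apply/eqP/matrixP => i j; rewrite mxE.
by have /existsPn/(_ j) := H i; rewrite negbK => /eqP.
Qed.

Lemma hpd_nz n (A : 'M[R[i]]_n) (x : 'cV[R[i]]_n) : hpd A -> x != 0 -> A *m x != 0.
Proof.
move=> [_ h] /h [h0 _]; apply/eqP => Ax0.
by move: h0; rewrite -mulmxA Ax0 mulmx0 mxE ltxx.
Qed.
End Pt.
Arguments cnorm2_entry {R n} v i.
Arguments nz_entry {R m n A}.
Arguments hpd_nz {R n A x}.
Arguments cabs2_gt0 {R z}.
Section NumS.
Variable R : realType.

Lemma log2_le (x y : R) : 0 < x -> x <= y -> log2 x <= log2 y.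
Proof.
move=> x0 xy; rewrite /log2 ler_wpM2r ?invr_ge0 ?ln_ge0 ?ler1n //.
by rewrite ler_ln ?posrE // (lt_le_trans x0 xy).
Qed.

Lemma pt_bound (Om Mr n1 n2 N1 N2 Zv : R) :
  0 < Om -> 0 < Mr -> 0 < n1 -> 0 < n2 ->
  n1 / 2 < N1 -> n2 / 2 < N2 -> 0 <= Zv ->
  Zv < Num.min (n2 / 4) (n1 / (2 * (Om * Mr)) * n2 / 8) * n1 / 2 ->
  (ln (1 + n1 / (2 * (Om * Mr))) - ln (1 + n1 / (2 * (Om * Mr)) / 2)) / ln 2 <=
  Num.max 0 (log2 (1 + 2^-1 * N1 / (Om * (2^-1 + (1 - 2^-1) * (Mr - 1)))) -
             log2 (1 + gamma_e_inf 2^-1 (Zv / N1) (N2 - Zv / N1))).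
Proof.
move=> Om0 Mr0 n10 n20 hN1 hN2 Z0 hZ.
set g := n1 / (2 * (Om * Mr)).
set t := Num.min _ _ in hZ.
have g0 : 0 < g by rewrite divr_gt0 // !mulr_gt0.
have t0 : 0 < t.
  rewrite lt_min; apply/andP; split; first by rewrite divr_gt0.
  by rewrite divr_gt0 // mulr_gt0.
have t1 : t <= n2 / 4 by rewrite ge_min lexx.
have t2 : t <= g * n2 / 8 by rewrite ge_min lexx orbT.
have N10 : 0 < N1 by apply: lt_trans hN1; rewrite divr_gt0.
have E : 2^-1 + (1 - 2^-1) * (Mr - 1) = Mr / 2 :> R by field.
have gb : g <= 2^-1 * N1 / (Om * (2^-1 + (1 - 2^-1) * (Mr - 1))).
  rewrite E (_ : 2^-1 * N1 / (Om * (Mr / 2)) = N1 / (Om * Mr)); last first.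
    by field; rewrite !gt_eqF.
  rewrite ler_pdivlMr ?mulr_gt0 // (_ : g * (Om * Mr) = n1 / 2).
    exact: ltW.
  by rewrite /g; field; rewrite !gt_eqF.
set a := Zv / N1.
have a0 : 0 <= a by rewrite divr_ge0 // ltW.
have aT : a < t.
  rewrite /a ltr_pdivrMr //; apply: (lt_le_trans hZ).
  rewrite -mulrA ler_wpM2l ?ltW //; rewrite mulrC; exact: ltW.
have Y0 : n2 / 4 < N2 - a by lra.
have ge : gamma_e_inf 2^-1 a (N2 - a) <= g / 2.
  rewrite /gamma_e_inf (_ : 2^-1 * a / ((1 - 2^-1) * (N2 - a)) = a / (N2 - a)); last first.
    field; apply/eqP => h; lra.
  rewrite ler_pdivrMr; last by lra.
  have : g / 2 * (n2 / 4) <= g / 2 * (N2 - a).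
    rewrite ler_wpM2l ?ltW //; by rewrite divr_gt0.
  have : g / 2 * (n2 / 4) = g * n2 / 8 by field.
  lra.
have h2 : (1 - 2^-1 : R) = 2^-1 by field.
have ge0 : 0 <= gamma_e_inf 2^-1 a (N2 - a).
  rewrite /gamma_e_inf divr_ge0 // ?mulr_ge0 // ?h2 ?invr_ge0 ?ler0n //; lra.
rewrite le_max; apply/orP; right.
have l20 : 0 < ln (2 : R) by rewrite ln_gt0 // ltr1n.
rewrite /log2 -mulrBl ler_wpM2r //. all: try by rewrite invr_ge0 ltW.
apply: lerB; rewrite ler_ln ?posrE //; try lra.
Qed.
End NumS.
Lemma z_pos (R : realType) (Om Mr n1 n2 : R) : 0 < Om -> 0 < Mr -> 0 < n1 -> 0 < n2 ->
  0 < Num.min (n2 / 4) (n1 / (2 * (Om * Mr)) * n2 / 8) * n1 / 2.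
Proof.
move=> h1 h2 h3 h4.
have m0 : 0 < Num.min (n2 / 4) (n1 / (2 * (Om * Mr)) * n2 / 8).
  rewrite lt_min; apply/andP; split; first by rewrite divr_gt0.
  by rewrite divr_gt0 // mulr_gt0 // divr_gt0 // !mulr_gt0.
by rewrite divr_gt0 // mulr_gt0.
Qed.
Lemma half_lb (R : realType) (a b : R) : `|b - a| < a / 2 -> a / 2 < b.
Proof. by rewrite ltr_norml => /andP [h _]; lra. Qed.
Lemma itv_norm (R : realType) (x y dl : R) : x - dl < y -> y < x + dl -> `|y - x| < dl.
Proof. by move=> h1 h2; rewrite ltr_norml; apply/andP; split; lra. Qed.
Lemma norm_lt0 (R : realType) (y z : R) : `|y - 0| < z -> y < z.
Proof. by rewrite subr0 ltr_norml => /andP [_ h]. Qed.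
Lemma c1_pos (R : realType) (g : R) : 0 < g -> 0 < (ln (1 + g) - ln (1 + g / 2)) / ln 2.
Proof.
move=> g0; have l20 : 0 < ln (2 : R) by rewrite ln_gt0 // ltr1n.
rewrite divr_gt0 // subr_gt0 ltr_ln ?posrE; try lra.
Qed.
Lemma eta_pos (R : realType) (a b : R) : 0 < a -> a < b -> 0 < 1 - a / b.
Proof.
move=> a0 ab; have b0 : 0 < b by apply: lt_trans ab.
by rewrite subr_gt0 ltr_pdivrMr // mul1r.
Qed.
Lemma half01 (R : realType) : 0 < (2^-1 : R) < 1.
Proof. by rewrite invr_gt0 ltr0n invf_lt1 ?ltr0n ?ltr1n. Qed.
Theorem lemma1 (R : realType) (d : measure_display) (T : measurableType d)
  (P : probability T R) (M : nat) (hM : (2 <= M)%N)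
  (sigma2 taup rhop Tc rho betab betae : R)
  (hsigma2 : 0 < sigma2) (htaup : 0 < taup) (hrhop : 0 < rhop) (hTc : taup < Tc)
  (hrho0 : 0 <= rho) (hrho1 : rho < 1) (hbetab : 0 < betab) (hbetae : 0 < betae)
  (Re_mx Reh Cm : 'M[R[i]]_M)
  (hRe : hpd Re_mx) (hReh : hpd Reh) (hRehsq : Reh *m Reh = Re_mx)
  (hC : spec_norm_le1 Cm)
  (gb u np : T -> 'cV[R[i]]_M)
  (hmodel : gaussian_model P sigma2 gb u np)
  (V : T -> 'M[R[i]]_(M, M.-1))
  (hV : forall w,
     adj (V w) *m V w = 1%:M /\
     adj (V w) *m hhat_b taup rhop betab sigma2
                    (y_p taup rhop (h_b betab (gb w)) (np w)) = 0) :
  let eta : R := 1 - taup / Tc in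
  let Om := Omega_ht taup rhop betab sigma2 in
  let hh := fun w => hhat_b taup rhop betab sigma2
                       (y_p taup rhop (h_b betab (gb w)) (np w)) in
  let he := fun w => h_e betae Reh (g_e rho Cm (gb w) (u w)) in
  let X := fun w => (adj (he w) *m wvec (hh w)) 0 0 in
  let Y := fun w => cnorm2 (adj (V w) *m he w) in
  let Rs_inf := fun alpha : R =>
    (eta%:E * \int[P]_w
       (Num.max 0 (log2 (1 + gamma_b_inf Om alpha (hh w))
                   - log2 (1 + gamma_e_inf alpha (cabs2 (X w)) (Y w))))%:E)%E in
  P [set w | 0 < Y w] = 1%E ->
  P [set w | 0 < cnorm2 (hh w)] = 1%E ->
  exists alpha0 : R, 0 < alpha0 < 1 /\ (0 < Rs_inf alpha0)%E.
Proof.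
destruct M as [|[|m]]; [by []|by []|].
move=> eta Om hh he X Y Rs_inf _ _.
set xw := Defs.coord gb u np.
pose e0 : 'cV[R[i]]_(m.+2) := delta_mx 0 0.
pose e1 : 'cV[R[i]]_(m.+2) := delta_mx 1 0.
pose r := Reh *m e0.
pose xv : 'cV[R[i]]_(m.+2) := if r 0 0 == 0 then e0 else (r 1 0)^*%C *: e0 - (r 0 0)^*%C *: e1.
pose s := Num.sqrt (1 - rho ^+ 2).
have s0 : 0 < s by rewrite sqrtr_gt0 subr_gt0 expr_lt1.
pose u0 := rC s^-1 *: (xv - rC rho *: (Cm *m e0)).
pose np0 : 'cV[R[i]]_(m.+2) := 0.
pose x0 := fun k => Defs.coord (fun _ : unit => e0) (fun _ => u0) (fun _ => np0) k tt.
have cgb : mcont xw x0 gb e0.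
  move=> i j; rewrite !ord1; split.
    exact: (cont_coord _ _ _ xw x0 (ord0, i, true)).
  exact: (cont_coord _ _ _ xw x0 (ord0, i, false)).
pose o1 : 'I_3 := Ordinal (isT : (1 < 3)%N).
pose o2 : 'I_3 := Ordinal (isT : (2 < 3)%N).
have cu : mcont xw x0 u u0.
  move=> i j; rewrite !ord1; split.
    exact: (cont_coord _ _ _ xw x0 (o1, i, true)).
  exact: (cont_coord _ _ _ xw x0 (o1, i, false)).
have cnp : mcont xw x0 np np0.
  move=> i j; rewrite !ord1; split.
    exact: (cont_coord _ _ _ xw x0 (o2, i, true)).
  exact: (cont_coord _ _ _ xw x0 (o2, i, false)).
pose hh0 := hhat_b taup rhop betab sigma2 (y_p taup rhop (h_b betab e0) np0).
pose he0 := h_e betae Reh (g_e rho Cm e0 u0).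
have chh : mcont xw x0 hh hh0.
  apply: mcont_scale; apply: mcont_add; last exact: cnp.
  apply: mcont_scale; exact: mcont_scale.
have che : mcont xw x0 he he0.
  apply: mcont_scale; apply: mcont_mul; first exact: mcont_cst.
  apply: mcont_add; apply: mcont_scale => //.
  apply: mcont_mul => //; exact: mcont_cst.
have cN1 : cont xw x0 (fun w => cnorm2 (hh w)) (cnorm2 hh0) by exact: cont_cnorm2.
have cN2 : cont xw x0 (fun w => cnorm2 (he w)) (cnorm2 he0) by exact: cont_cnorm2.
have cZ : cont xw x0 (fun w => cabs2 ((adj (he w) *m hh w) 0 0))
                     (cabs2 ((adj he0 *m hh0) 0 0)).
  apply: cont_cabs2; apply: mcont_mul => //; exact: mcont_adj.
pose K := Num.sqrt (taup * rhop) * betab / (taup * rhop * betab + sigma2) *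
   (Num.sqrt (taup * rhop) * Num.sqrt betab).
have K0 : 0 < K.
  have tr0 : 0 < taup * rhop by rewrite mulr_gt0.
  have q1 : 0 < Num.sqrt (taup * rhop) by rewrite sqrtr_gt0.
  have q2 : 0 < Num.sqrt betab by rewrite sqrtr_gt0.
  have q3 : 0 < taup * rhop * betab + sigma2 by rewrite addr_gt0 // mulr_gt0.
  by rewrite /K mulr_gt0 // ?divr_gt0 // ?mulr_gt0.
have Phh : hh0 = rC K *: e0.
  by rewrite /hh0 /hhat_b /y_p /h_b /np0 addr0 !scalerA !rCM /K !mulrA.
have Pge : g_e rho Cm e0 u0 = xv.
  rewrite /g_e /u0 -/s scalerA rCM mulfV ?gt_eqF // rC1 scale1r.
  by rewrite addrC subrK.
have Phe : he0 = rC (Num.sqrt betae) *: (Reh *m xv) by rewrite /he0 /h_e Pge.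
have xvnz : xv != 0.
  rewrite /xv; case: ifP => h0.
    apply/eqP => /matrixP /(_ 0 0); rewrite !mxE eqxx /=; apply/eqP; exact: oner_neq0.
  set a := (r 1 0)^*%C; set b := (r 0 0)^*%C.
  apply/eqP => /matrixP /(_ 1 0); rewrite !mxE /= mulr0 mulr1 sub0r; apply/eqP.
  by rewrite /b oppr_eq0 conjc_eq0 h0.
have xr : adj xv *m r = 0.
  apply/matrixP => i j; rewrite !ord1 [RHS]mxE /xv; case: ifP => h0.
    by rewrite /e0 adj_delta -rowE mxE; apply/eqP.
  rewrite adjB !adjZ !conjcK /e0 /e1 !adj_delta mulmxBl -!scalemxAl -!rowE !mxE.
  by rewrite mulrC subrr.
have Z0 : cabs2 ((adj he0 *m hh0) 0 0) = 0.
  rewrite Phe Phh adjZ adjM -scalemxAl -scalemxAr -mulmxA.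
  have -> : adj Reh = Reh by case: hReh.
  by rewrite -/r xr !scaler0 mxE /cabs2 /= expr0n /= addr0.
have n1 : 0 < cnorm2 hh0.
  apply: (lt_le_trans _ (cnorm2_entry _ 0)).
  by rewrite Phh mxE cabs2_rCM mxE eqxx /cabs2 /= expr1n expr0n addr0 mulr1 exprn_gt0.
have n2 : 0 < cnorm2 he0.
  have [i [j nzij]] := nz_entry (hpd_nz hReh xvnz).
  apply: (lt_le_trans _ (cnorm2_entry _ i)).
  rewrite Phe mxE cabs2_rCM mulr_gt0 ?exprn_gt0 ?sqrtr_gt0 //.
  apply: cabs2_gt0; by rewrite -(ord1 j).
have Om0 : 0 < Om.
  by rewrite /Om /Omega_ht divr_gt0 ?mulr_gt0 // addr_gt0 // !mulr_gt0.
pose Mr : R := (m.+2)%:R.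
have Mr0 : 0 < Mr by rewrite ltr0n.
set n1v := cnorm2 hh0 in n1 cN1.
set n2v := cnorm2 he0 in n2 cN2.
rewrite Z0 in cZ.
pose z := Num.min (n2v / 4) (n1v / (2 * (Om * Mr)) * n2v / 8) * n1v / 2.
have z0 : 0 < z by exact: z_pos.
have [d1 d10 h1] := cN1 (n1v / 2) (divr_gt0 n1 (ltr0n _ 2)).
have [d2 d20 h2] := cN2 (n2v / 2) (divr_gt0 n2 (ltr0n _ 2)).
have [d3 d30 h3] := cZ z z0.
pose dl := Num.min d1 (Num.min d2 d3).
have dl0 : 0 < dl by rewrite !lt_min d10 d20 d30.
pose B := \bigcap_(k in [set: ('I_3 * 'I_m.+2 * bool)%type])
            (xw k @^-1` `]x0 k - dl, x0 k + dl[%classic).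
pose c1 := (ln (1 + n1v / (2 * (Om * Mr))) - ln (1 + n1v / (2 * (Om * Mr)) / 2)) / ln 2.
have key : forall w, B w ->
  c1 <= Num.max 0 (log2 (1 + gamma_b_inf Om 2^-1 (hh w))
                   - log2 (1 + gamma_e_inf 2^-1 (cabs2 (X w)) (Y w))).
  move=> w Bw.
  have hk : forall k, `|xw k w - x0 k| < dl.
    move=> k; have := Bw k I; rewrite /= in_itv /= => /andP [lo hi].
    exact: itv_norm.
  have hk1 : forall k, `|xw k w - x0 k| < d1.
    by move=> k; apply: (lt_le_trans (hk k)); rewrite ge_min lexx.
  have hk2 : forall k, `|xw k w - x0 k| < d2.
    by move=> k; apply: (lt_le_trans (hk k)); rewrite !ge_min lexx orbT.
  have hk3 : forall k, `|xw k w - x0 k| < d3.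
    by move=> k; apply: (lt_le_trans (hk k)); rewrite !ge_min lexx !orbT.
  have hN1' := @half_lb _ _ _ (h1 w hk1).
  have hN2' := @half_lb _ _ _ (h2 w hk2).
  have hZ := @norm_lt0 _ _ _ (h3 w hk3).
  have N1pos : 0 < cnorm2 (hh w) := lt_trans (divr_gt0 n1 (ltr0n _ 2)) hN1'.
  have [VV Vh] := hV w.
  have EY : Y w = cnorm2 (he w) - cabs2 (X w) by exact: proj_identity.
  have EX : cabs2 (X w) = cabs2 ((adj (he w) *m hh w) 0 0) / cnorm2 (hh w).
    exact: X_eq.
  rewrite EY EX /gamma_b_inf.
  apply: pt_bound; [exact: Om0|exact: Mr0|exact: n1|exact: n2|exact: hN1'|exact: hN2'| |exact: hZ].
  by rewrite /cabs2 addr_ge0 ?sqr_ge0.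
have mpre : forall k, measurable (xw k @^-1` `]x0 k - dl, x0 k + dl[%classic).
  move=> k; rewrite -[_ @^-1` _]setTI.
  exact: ((hmodel.1 k) measurableT _ (measurable_itv _)).
have mB : measurable B.
  apply: fin_bigcap_measurable; first exact: finite_finset.
  move=> k _; exact: mpre.
have PB : (0 < P B)%E.
  rewrite /B /xw (hmodel.2.1 (fun k => `]x0 k - dl, x0 k + dl[%classic)); last first.
    move=> k; exact: measurable_itv.
  apply: (big_ind (fun x : \bar R => (0 < x)%E)).
  - by rewrite lte_fin ltr01.
  - by move=> a b a0 b0; apply: mule_gt0.
  move=> k _; rewrite (hmodel.2.2 k); last exact: measurable_itv.
  apply: normal_itv_gt0.
    rewrite sqrtr_gt0; case: ifP => _; apply: divr_gt0 => //; exact: ltr01.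
  apply: (@lt_trans _ _ (x0 k)); [rewrite ltrBlDr ltrDl | rewrite ltrDl]; exact: dl0.
have c10 : 0 < c1 by apply: c1_pos; apply: divr_gt0 => //; apply: mulr_gt0 => //; exact: mulr_gt0.
exists 2^-1; split; first exact: half01.
rewrite /Rs_inf; apply: mule_gt0; first by rewrite lte_fin; exact: eta_pos.
apply: (@lt_le_trans _ _ (c1%:E * P B)%E); first by apply: mule_gt0 => //; rewrite lte_fin.
apply: (@int_lb _ _ _ P setT B measurableT mB _ c1 (ltW c10)).
- by [].
- by move=> x _; rewrite lee_fin le_max lexx.
- by move=> x Bx; rewrite lee_fin; exact: key.
Qed.
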